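(* Let $v_1\ge v_2>0$, $m\in\mathbb{Z}_{\ge0}$ and $0<\beta\le\alpha<1$. A strategy profile $(X,Y)$ with $\mathbf{E}(X)=m+\alpha$ and $\mathbf{E}(Y)=m+\beta$ is a Nash equilibrium of the discrete all-pay auction with valuations $v_1,v_2$ if and only if $v_1/2=v_2/2=m+1$, $X=(1-\alpha)U_{\mathrm{E}}^m+\alpha U_{\mathrm{O}}^{m+1}$ and $Y=(1-\beta)U_{\mathrm{E}}^m+\beta U_{\mathrm{O}}^{m+1}$. In this case the equilibrium payoffs are $P^1(X,Y)=1-\beta$ and $P^2(Y,X)=1-\alpha$.
   Context: Discrete all-pay auction: two players, 1 and 2, value a prize at $v_1$ and $v_2$ respectively, where $v_1\ge v_2>0$. A (mixed) strategy is a probability distribution on $\mathbb{Z}_{\ge 0}$ with finite mean, identified with a $\mathbb{Z}_{\ge0}$-valued random variable; the two players' choices are independent. If player 1 uses $X$ and player 2 uses $Y$, the expected payoffs are $P^1(X,Y)=v_1\Pr(X>Y)+\frac{v_1}{2}\Pr(X=Y)-\mathbf{E}(X)$ and $P^2(Y,X)=v_2\Pr(Y>X)+\frac{v_2}{2}\Pr(X=Y)-\mathbf{E}(Y)$. A Nash equilibrium of the all-pay auction is a pair $(X,Y)$ with $P^1(X,Y)\ge P^1(X',Y)$ and $P^2(Y,X)\ge P^2(Y',X)$ for all strategies $X',Y'$. $\lambda A+(1-\lambda)B$ denotes the mixture of distributions $A$ and $B$. Special distributions: for $m\ge1$, $U_{\mathrm{O}}^m$ is the uniform distribution on $\{1,3,\dots,2m-1\}$;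 for $m\ge0$, $U_{\mathrm{E}}^m$ is the uniform distribution on $\{0,2,\dots,2m\}$. *)

(* Defs.v *)
From Stdlib Require Import Reals.
From Coquelicot Require Import Coquelicot.
Open Scope R_scope.

Definition is_strategy (p : nat -> R) : Prop :=
  (forall n, 0 <= p n) /\ is_series p 1 /\ ex_series (fun n => INR n * p n).

Definition mean (p : nat -> R) : R := Series (fun n => INR n * p n).

(* below q i = Pr(Y < i) = q 0 + ... + q (i-1) *)
Fixpoint below (q : nat -> R) (i : nat) : R :=
  match i with
  | O => 0
  | S k => below q k + q k
  end.

Definition prob_gt (p q : nat -> R) : R := Series (fun i => p i * below q i).

Definition prob_eq (p q : nat -> R) : R := Series (fun i => p i * q i).

Definition payoff (v : R) (p q : nat -> R) : R :=
  v * prob_gt p q + v / 2 * prob_eq p q - mean p.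

(* Nash equilibrium (X,Y) of the all-pay auction with valuations v1, v2:
   P^1(X,Y) = payoff v1 p q,  P^2(Y,X) = payoff v2 q p. *)
Definition nash (v1 v2 : R) (p q : nat -> R) : Prop :=
  is_strategy p /\ is_strategy q /\
  (forall p', is_strategy p' -> payoff v1 p' q <= payoff v1 p q) /\
  (forall q', is_strategy q' -> payoff v2 q' p <= payoff v2 q p).

Definition UO (m : nat) (n : nat) : R :=
  if andb (Nat.odd n) (Nat.ltb n (2 * m)) then / INR m else 0.

Definition UE (m : nat) (n : nat) : R :=
  if andb (Nat.even n) (Nat.leb n (2 * m)) then / INR (S m) else 0.

Definition mix (lam : R) (A B : nat -> R) : nat -> R :=
  fun n => lam * A n + (1 - lam) * B n.

(* Main.v *)
Require Import Defs.
From Stdlib Require Import Reals.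
From Coquelicot Require Import Coquelicot.
Open Scope R_scope.
From Stdlib Require Import Lra Lia FunctionalExtensionality.

Lemma below_S r n : below r (S n) = below r n + r n.
Proof. reflexivity. Qed.

Lemma below_sum_f r n : below r (S n) = sum_f_R0 r n.
Proof. induction n. simpl. ring. rewrite below_S, IHn. simpl. ring. Qed.

Lemma below_sum_n r n : below r (S n) = sum_n r n.
Proof. rewrite below_sum_f. symmetry. apply sum_n_Reals. Qed.

Lemma below_ext r s n : (forall k, (k < n)%nat -> r k = s k) -> below r n = below s n.
Proof. induction n; intros H. reflexivity. rewrite !below_S, IHn, H; auto. Qed.

Lemma below_plus r s n : below (fun k => r k + s k) n = below r n + below s n.
Proof. induction n. simpl; ring. rewrite !below_S, IHn. ring. Qed.

Lemma below_minus r s n : below (fun k => r k - s k) n = below r n - below s n.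
Proof. induction n. simpl; ring. rewrite !below_S, IHn. ring. Qed.

Lemma below_scal c r n : below (fun k => c * r k) n = c * below r n.
Proof. induction n. simpl; ring. rewrite !below_S, IHn. ring. Qed.

Lemma below_nonneg r n : (forall k, 0 <= r k) -> 0 <= below r n.
Proof. intros H; induction n. simpl; lra. rewrite below_S. specialize (H n). lra. Qed.

Lemma below_zero_each r L : (forall k, (k < L)%nat -> 0 <= r k) -> below r L = 0 ->
  forall k, (k < L)%nat -> r k = 0.
Proof.
  induction L; intros Hn H0 k Hk. lia.
  rewrite below_S in H0.
  assert (0 <= below r L).
  { clear -Hn. induction L. simpl; lra. rewrite below_S.
    assert (0 <= r L) by (apply Hn; lia). assert (0 <= below r L) by (apply IHL; intros; apply Hn; lia). lra. }
  assert (0 <= r L) by (apply Hn; lia).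
  destruct (Nat.eq_dec k L). subst; lra.
  apply IHL; try lia. intros; apply Hn; lia. lra.
Qed.

Lemma below_support r K : (forall k, (K <= k)%nat -> r k = 0) ->
  forall n, (K <= n)%nat -> below r n = below r K.
Proof.
  intros H n Hn. induction n. assert (K = 0%nat) by lia. subst; reflexivity.
  destruct (Nat.eq_dec K (S n)). subst; reflexivity.
  rewrite below_S, IHn by lia. rewrite H by lia. ring.
Qed.

Lemma is_series_support r K : (forall k, (K <= k)%nat -> r k = 0) ->
  is_series r (below r K).
Proof.
  intros H. unfold is_series. change (is_lim_seq (sum_n r) (below r K)).
  apply is_lim_seq_ext_loc with (u := fun _ => below r K).
  exists K. intros n Hn. rewrite <- below_sum_n. symmetry. apply below_support; auto.
  apply is_lim_seq_const.
Qed.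

Lemma Series_support r K : (forall k, (K <= k)%nat -> r k = 0) -> Series r = below r K.
Proof. intros H. apply is_series_unique, is_series_support; auto. Qed.

Lemma ex_series_support r K : (forall k, (K <= k)%nat -> r k = 0) -> ex_series r.
Proof. intros H. exists (below r K). apply is_series_support; auto. Qed.

Lemma Series_nonneg a : (forall n, 0 <= a n) -> ex_series a -> 0 <= Series a.
Proof.
  intros H He. assert (Series (fun _ => 0) <= Series a).
  apply Series_le; auto. intros n; split; [lra| auto].
  rewrite (Series_support (fun _ => 0) 0) in H0 by auto. simpl in H0. auto.
Qed.

Lemma Series_split a K : (forall n, 0 <= a n) -> ex_series a ->
  Series a = below a (S K) + Series (fun k => a (S K + k)%nat) /\
  0 <= Series (fun k => a (S K + k)%nat).
Proof.
  intros H He. split.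
  rewrite (Series_incr_n a (S K)) by (auto; lia). simpl pred. rewrite below_sum_f. reflexivity.
  apply Series_nonneg. intros; auto. apply (ex_series_incr_n a (S K)). auto.
Qed.

Lemma below_le_Series a K : (forall n, 0 <= a n) -> ex_series a -> below a K <= Series a.
Proof.
  intros H He. destruct K. simpl. apply Series_nonneg; auto.
  destruct (Series_split a K H He). lra.
Qed.

Lemma Series_zero_each a : (forall n, 0 <= a n) -> ex_series a -> Series a = 0 -> forall n, a n = 0.
Proof.
  intros H He H0 n. assert (below a (S n) <= 0) by (rewrite <- H0; apply below_le_Series; auto).
  rewrite below_S in H1. pose proof (below_nonneg a n H). specialize (H n). lra.
Qed.

Lemma exR_scal c a : ex_series a -> ex_series (fun n => c * a n).
Proof. intros H. exact (@ex_series_scal_l R_AbsRing R_NormedModule c a H). Qed.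
Lemma exR_plus a b : ex_series a -> ex_series b -> ex_series (fun n => a n + b n).
Proof. intros H H'. exact (@ex_series_plus R_AbsRing R_NormedModule a b H H'). Qed.
Lemma exR_minus a b : ex_series a -> ex_series b -> ex_series (fun n => a n - b n).
Proof. intros H H'. exact (@ex_series_minus R_AbsRing R_NormedModule a b H H'). Qed.

Lemma strat_below_le1 q n : is_strategy q -> 0 <= below q n <= 1.
Proof.
  intros [Ha [Hb Hc]]. split. apply below_nonneg; auto.
  assert (Series q = 1) by (apply is_series_unique; auto).
  rewrite <- H. apply below_le_Series; auto. exists 1; auto.
Qed.

Lemma strat_le1 q n : is_strategy q -> 0 <= q n <= 1.
Proof.
  intros Hq. pose proof (strat_below_le1 q (S n) Hq). pose proof (strat_below_le1 q n Hq).
  rewrite below_S in H. destruct Hq as [Hz _]. specialize (Hz n). lra.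
Qed.

Lemma strat_ex q : is_strategy q -> ex_series q.
Proof. intros [_ [H _]]. exists 1; auto. Qed.

Lemma strat_Series q : is_strategy q -> Series q = 1.
Proof. intros [_ [H _]]. apply is_series_unique; auto. Qed.

Lemma ex_series_bounded p f : is_strategy p -> (forall n, Rabs (f n) <= 1) ->
  ex_series (fun n => p n * f n).
Proof.
  intros Hp Hf. apply (@ex_series_le R_AbsRing R_CompleteNormedModule _ p). intros n. change (Rabs (p n * f n) <= p n).
  rewrite Rabs_mult. destruct Hp as [H0 _]. rewrite Rabs_pos_eq by auto.
  specialize (H0 n). specialize (Hf n). nra.
  apply strat_ex; auto.
Qed.

Definition F (v : R) (q : nat -> R) (n : nat) : R := v * below q n + v / 2 * q n - INR n.

Lemma ex_gt p q : is_strategy p -> is_strategy q -> ex_series (fun n => p n * below q n).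
Proof. intros Hp Hq. apply ex_series_bounded; auto. intros n.
  pose proof (strat_below_le1 q n Hq). rewrite Rabs_pos_eq; lra. Qed.

Lemma ex_eq p q : is_strategy p -> is_strategy q -> ex_series (fun n => p n * q n).
Proof. intros Hp Hq. apply ex_series_bounded; auto. intros n.
  pose proof (strat_le1 q n Hq). rewrite Rabs_pos_eq; lra. Qed.

Lemma payoff_series v p q : is_strategy p -> is_strategy q ->
  payoff v p q = Series (fun n => p n * F v q n) /\ ex_series (fun n => p n * F v q n).
Proof.
  intros Hp Hq. pose proof (ex_gt p q Hp Hq). pose proof (ex_eq p q Hp Hq).
  assert (Hm : ex_series (fun n => INR n * p n)) by (destruct Hp as [_ [_ H']]; auto).
  assert (E1 : ex_series (fun n => v * (p n * below q n))) by (apply exR_scal; auto).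
  assert (E2 : ex_series (fun n => v / 2 * (p n * q n))) by (apply exR_scal; auto).
  assert (E3 : ex_series (fun n => v * (p n * below q n) + v / 2 * (p n * q n))) by (apply exR_plus; auto).
  assert (E4 : ex_series (fun n => (v * (p n * below q n) + v / 2 * (p n * q n)) - INR n * p n)) by (apply exR_minus; auto).
  split.
  - unfold payoff, prob_gt, prob_eq, mean.
    rewrite <- !Series_scal_l. rewrite <- Series_plus by auto. rewrite <- Series_minus by auto.
    apply Series_ext. intros n. unfold F. ring.
  - eapply ex_series_ext; [|exact E4]. intros n; simpl. unfold F. ring.
Qed.

Lemma prob_eq_comm p q : prob_eq p q = prob_eq q p.
Proof. unfold prob_eq. apply Series_ext. intros; ring. Qed.

Lemma below_prod_identity p q N :
  below (fun i => p i * below q i) N + below (fun i => q i * below p i) N + below (fun i => p i * q i) N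
  = below p N * below q N.
Proof. induction N. simpl; ring. rewrite !below_S. nra. Qed.

Lemma prob_total p q : is_strategy p -> is_strategy q ->
  prob_gt p q + prob_gt q p + prob_eq p q = 1.
Proof.
  intros Hp Hq. unfold prob_gt, prob_eq.
  pose proof (Series_correct _ (ex_gt p q Hp Hq)) as A1.
  pose proof (Series_correct _ (ex_gt q p Hq Hp)) as A2.
  pose proof (Series_correct _ (ex_eq p q Hp Hq)) as A3.
  assert (B1 : is_lim_seq (sum_n p) 1) by (destruct Hp as [_ [H _]]; exact H).
  assert (B2 : is_lim_seq (sum_n q) 1) by (destruct Hq as [_ [H _]]; exact H).
  pose proof (is_lim_seq_plus' _ _ _ _ (is_lim_seq_plus' _ _ _ _ A1 A2) A3) as L1.
  pose proof (is_lim_seq_mult' _ _ _ _ B1 B2) as L2.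
  assert (L1' : is_lim_seq (fun n => sum_n p n * sum_n q n)
     (Series (fun n => p n * below q n) + Series (fun n => q n * below p n) + Series (fun n => p n * q n))).
  { eapply is_lim_seq_ext; [|exact L1]. intros n. simpl. rewrite <- !below_sum_n. apply below_prod_identity. }
  pose proof (is_lim_seq_unique _ _ L1') as U1. pose proof (is_lim_seq_unique _ _ L2) as U2.
  rewrite U1 in U2. injection U2. lra.
Qed.

Definition alt (m : nat) (x y : R) (n : nat) : R :=
  if Nat.leb n (2*m+1) then (if Nat.even n then x else y) else 0.

Lemma even2 k : Nat.even (2*k) = true.
Proof. apply Nat.even_spec. exists k. reflexivity. Qed.
Lemma even21 k : Nat.even (2*k+1) = false.
Proof. rewrite Nat.even_add, even2. reflexivity. Qed.

Lemma alt_even m x y k : (k <= m)%nat -> alt m x y (2*k) = x.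
Proof. intros H. unfold alt. rewrite even2. destruct (Nat.leb_spec (2*k) (2*m+1)); [reflexivity|lia]. Qed.
Lemma alt_odd m x y k : (k <= m)%nat -> alt m x y (2*k+1) = y.
Proof. intros H. unfold alt. rewrite even21. destruct (Nat.leb_spec (2*k+1) (2*m+1)); [reflexivity|lia]. Qed.
Lemma alt_out m x y n : (2*m+2 <= n)%nat -> alt m x y n = 0.
Proof. intros H. unfold alt. destruct (Nat.leb_spec n (2*m+1)); [lia|reflexivity]. Qed.

Lemma below_alt_even m x y k : (k <= S m)%nat -> below (alt m x y) (2*k) = INR k * (x+y).
Proof.
  induction k; intros H. simpl. ring.
  replace (2 * S k)%nat with (S (S (2*k))) by lia. rewrite !below_S, IHk by lia.
  replace (S (2*k)) with (2*k+1)%nat by lia. rewrite alt_even, alt_odd by lia. rewrite S_INR. ring.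
Qed.

Lemma below_alt_odd m x y k : (k <= m)%nat -> below (alt m x y) (2*k+1) = INR k * (x+y) + x.
Proof.
  intros H. replace (2*k+1)%nat with (S (2*k)) by lia. rewrite below_S, below_alt_even by lia.
  rewrite alt_even by lia. ring.
Qed.

Lemma below_alt_mean m x y k : (k <= S m)%nat ->
  below (fun n => INR n * alt m x y n) (2*k) = x * (INR k * (INR k - 1)) + y * (INR k * INR k).
Proof.
  induction k; intros H. simpl. ring.
  replace (2 * S k)%nat with (S (S (2*k))) by lia. rewrite !below_S, IHk by lia.
  replace (S (2*k)) with (2*k+1)%nat by lia. rewrite alt_even, alt_odd by lia.
  rewrite S_INR, plus_INR, mult_INR. simpl. ring.
Qed.

Lemma alt_weighted m x y (Q : nat -> R) k : (k <= S m)%nat ->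
  below (fun n => alt m x y n * (Q n + Q (S n))) (2*k) = (x+y) * below Q (2*k) + y * Q (2*k)%nat - y * Q 0%nat.
Proof.
  induction k; intros H. simpl. ring.
  replace (2 * S k)%nat with (S (S (2*k))) by lia. rewrite !below_S, IHk by lia.
  replace (S (2*k)) with (2*k+1)%nat by lia. rewrite alt_even, alt_odd by lia.
  replace (S (2*k+1)) with (S (S (2*k))) by lia. ring.
Qed.

Lemma below_below q L : below (below q) L + below (fun k => INR k * q k) L = (INR L - 1) * below q L.
Proof. induction L. simpl; ring. rewrite !below_S. rewrite S_INR. nra. Qed.

Definition delta (n k : nat) : R := if Nat.eq_dec k n then 1 else 0.

Lemma below_delta_lo n f L : (L <= n)%nat -> below (fun k => delta n k * f k) L = 0.
Proof.
  induction L; intros H. reflexivity. rewrite below_S, IHL by lia. unfold delta.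
  destruct (Nat.eq_dec L n). lia. ring.
Qed.

Lemma below_delta n f : below (fun k => delta n k * f k) (S n) = f n.
Proof. rewrite below_S, below_delta_lo by lia. unfold delta. destruct (Nat.eq_dec n n); [ring|lia]. Qed.

Lemma strategy_support r K : (forall k, 0 <= r k) -> (forall k, (K <= k)%nat -> r k = 0) ->
  below r K = 1 -> is_strategy r.
Proof.
  intros H0 H1 H2. split; auto. split. rewrite <- H2. apply is_series_support; auto.
  apply (ex_series_support _ K). intros k Hk. rewrite H1; auto. ring.
Qed.

Lemma payoff_support v r q K : is_strategy r -> is_strategy q -> (forall k, (K <= k)%nat -> r k = 0) ->
  payoff v r q = below (fun n => r n * F v q n) K.
Proof.
  intros Hr Hq H. destruct (payoff_series v r q Hr Hq) as [E _]. rewrite E.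
  apply Series_support. intros k Hk. rewrite H; auto. ring.
Qed.

Lemma delta_strategy n : is_strategy (delta n).
Proof.
  apply (strategy_support _ (S n)).
  intros k; unfold delta; destruct (Nat.eq_dec k n); lra.
  intros k Hk; unfold delta; destruct (Nat.eq_dec k n); [lia|reflexivity].
  pose proof (below_delta n (fun _ => 1)) as H. cbv beta in H.
  rewrite <- H. apply below_ext. intros; ring.
Qed.

Lemma payoff_delta v n q : is_strategy q -> payoff v (delta n) q = F v q n.
Proof.
  intros Hq. rewrite (payoff_support v (delta n) q (S n)); auto. apply below_delta.
  apply delta_strategy. intros k Hk; unfold delta; destruct (Nat.eq_dec k n); [lia|reflexivity].
Qed.

Lemma mix_alt m a : mix (1 - a) (UE m) (UO (S m)) = alt m ((1-a)/(INR m+1)) (a/(INR m+1)).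
Proof.
  pose proof (pos_INR m) as Pm.
  extensionality n. destruct (Nat.Even_or_Odd n) as [[k Hk]|[k Hk]]; subst n.
  - unfold mix, UE, UO, alt, Nat.odd. rewrite even2. cbn [negb andb].
    destruct (Nat.le_gt_cases k m).
    + replace (Nat.leb (2*k) (2*m)) with true by (symmetry; apply Nat.leb_le; lia).
      replace (Nat.leb (2*k) (2*m+1)) with true by (symmetry; apply Nat.leb_le; lia).
      rewrite S_INR. field. lra.
    + replace (Nat.leb (2*k) (2*m)) with false by (symmetry; apply Nat.leb_gt; lia).
      replace (Nat.leb (2*k) (2*m+1)) with false by (symmetry; apply Nat.leb_gt; lia).
      ring.
  - unfold mix, UE, UO, alt, Nat.odd. rewrite even21. cbn [negb andb].
    destruct (Nat.le_gt_cases k m).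
    + replace (Nat.ltb (2*k+1) (2*S m)) with true by (symmetry; apply Nat.ltb_lt; lia).
      replace (Nat.leb (2*k+1) (2*m+1)) with true by (symmetry; apply Nat.leb_le; lia).
      rewrite S_INR. field. lra.
    + replace (Nat.ltb (2*k+1) (2*S m)) with false by (symmetry; apply Nat.ltb_ge; lia).
      replace (Nat.leb (2*k+1) (2*m+1)) with false by (symmetry; apply Nat.leb_gt; lia).
      ring.
Qed.

Definition xa (m : nat) (a : R) := (1 - a) / (INR m + 1).
Definition ya (m : nat) (a : R) := a / (INR m + 1).
Definition pa (m : nat) (a : R) := alt m (xa m a) (ya m a).

Lemma INR_2Sm m : INR (2 * S m) = 2 * INR m + 2.
Proof. rewrite mult_INR, !S_INR. simpl. ring. Qed.

Lemma pa_out m a n : (2 * S m <= n)%nat -> pa m a n = 0.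
Proof. intros; unfold pa; apply alt_out; lia. Qed.

Lemma pa_nonneg m a n : 0 <= a <= 1 -> 0 <= pa m a n.
Proof.
  intros Ha. pose proof (pos_INR m). unfold pa, alt, xa, ya.
  destruct (Nat.leb n (2*m+1)); [destruct (Nat.even n)|]; try lra;
  apply Rmult_le_pos; try lra; left; apply Rinv_0_lt_compat; lra.
Qed.

Lemma pa_sum m a : below (pa m a) (2 * S m) = 1.
Proof.
  unfold pa. rewrite below_alt_even by lia. unfold xa, ya. rewrite S_INR. field.
  pose proof (pos_INR m). lra.
Qed.

Lemma pa_strategy m a : 0 <= a <= 1 -> is_strategy (pa m a).
Proof.
  intros Ha. apply (strategy_support _ (2 * S m)). intros; apply pa_nonneg; auto.
  apply pa_out. apply pa_sum.
Qed.

Lemma pa_mean m a : 0 <= a <= 1 -> mean (pa m a) = INR m + a.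
Proof.
  intros Ha. unfold mean. rewrite (Series_support _ (2 * S m)).
  unfold pa. rewrite below_alt_mean by lia. unfold xa, ya. rewrite S_INR. field.
  pose proof (pos_INR m). lra.
  intros k Hk. rewrite pa_out; auto. ring.
Qed.

Definition Tsum (m : nat) (a : R) (q : nat -> R) :=
  below (fun n => pa m a n * (below q n + below q (S n))) (2 * S m).

Lemma payoff_pa v m a q : 0 <= a <= 1 -> is_strategy q ->
  payoff v (pa m a) q = v / 2 * Tsum m a q - (INR m + a).
Proof.
  intros Ha Hq. rewrite (payoff_support v (pa m a) q (2 * S m)); auto.
  2: apply pa_strategy; auto. 2: apply pa_out.
  rewrite <- (pa_mean m a Ha). unfold mean. rewrite (Series_support _ (2 * S m)).
  2: intros k Hk; rewrite pa_out; auto; ring.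
  unfold Tsum. rewrite <- below_scal, <- below_minus. apply below_ext. intros k _.
  unfold F. rewrite below_S. field.
Qed.

Lemma mean_tail_bound q L : is_strategy q ->
  below (fun k => INR k * q k) L + INR L * (1 - below q L) <= mean q.
Proof.
  intros Hq. destruct L.
  - simpl. rewrite Rmult_0_l, Rplus_0_l. apply Series_nonneg. intros n. pose proof (pos_INR n).
    destruct Hq as [H0 _]. specialize (H0 n). nra. destruct Hq as [_ [_ H]]; auto.
  - assert (Hn : forall n, 0 <= INR n * q n).
    { intros n. pose proof (pos_INR n). destruct Hq as [H0 _]. specialize (H0 n). nra. }
    assert (He : ex_series (fun n => INR n * q n)) by (destruct Hq as [_ [_ H]]; auto).
    destruct (Series_split _ L Hn He) as [E1 _]. unfold mean. rewrite E1.
    destruct (Series_split q L (proj1 Hq) (strat_ex q Hq)) as [E2 _].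
    rewrite (strat_Series q Hq) in E2.
    assert (INR (S L) * Series (fun k => q (S L + k)%nat) <= Series (fun k => INR (S L + k)%nat * q (S L + k)%nat)).
    { rewrite <- Series_scal_l. apply Series_le.
      intros n. split. apply Rmult_le_pos. apply pos_INR. apply (proj1 Hq).
      apply Rmult_le_compat_r. apply (proj1 Hq). apply le_INR. lia.
      apply (ex_series_incr_n (fun n => INR n * q n) (S L)). auto. }
    assert (1 - below q (S L) = Series (fun k => q (S L + k)%nat)) by lra.
    rewrite H0. lra.
Qed.

Lemma Tsum_lower m a b q : 0 <= a <= 1 -> is_strategy q -> mean q = INR m + b ->
  (2 * INR m + 1) + a - (INR m + b) + (1 - a) * (1 - below q (2 * S m)) <= (INR m + 1) * Tsum m a q.
Proof.
  intros Ha Hq Hm. unfold Tsum, pa.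
  rewrite (alt_weighted m (xa m a) (ya m a) (below q) (S m)) by lia.
  pose proof (below_below q (2 * S m)) as BB. rewrite INR_2Sm in BB.
  pose proof (mean_tail_bound q (2 * S m) Hq) as MT. rewrite INR_2Sm, Hm in MT.
  simpl (below q 0) .
  assert (E : below (below q) (2 * S m) = (2 * INR m + 2 - 1) * below q (2 * S m) - below (fun k => INR k * q k) (2 * S m)) by lra.
  rewrite E. unfold xa, ya.
  assert (P : 0 < INR m + 1) by (pose proof (pos_INR m); lra).
  replace ((INR m + 1) * (((1 - a) / (INR m + 1) + a / (INR m + 1)) *
     ((2 * INR m + 2 - 1) * below q (2 * S m) - below (fun k => INR k * q k) (2 * S m)) +
     a / (INR m + 1) * below q (2 * S m) - a / (INR m + 1) * 0))
   with ((2 * INR m + 2 - 1) * below q (2 * S m) - below (fun k => INR k * q k) (2 * S m) + a * below q (2 * S m))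
   by (field; lra).
  lra.
Qed.

Lemma helper_v v x : 0 < v -> 1 = x * (2 / v) -> v / 2 = x.
Proof. intros Hv H. replace x with (x * (2/v) * (v/2)) by (field; lra). rewrite <- H. ring. Qed.

Lemma parity n : exists k, n = (2*k)%nat \/ n = (2*k+1)%nat.
Proof. destruct (Nat.Even_or_Odd n) as [[k Hk]|[k Hk]]; exists k; auto. Qed.

Lemma pa_pos m a n : 0 < a < 1 -> (n < 2 * S m)%nat -> 0 < pa m a n.
Proof.
  intros Ha Hn. pose proof (pos_INR m). destruct (parity n) as [k [->| ->]]; unfold pa.
  rewrite alt_even by lia. unfold xa. apply Rdiv_lt_0_compat; lra.
  rewrite alt_odd by lia. unfold ya. apply Rdiv_lt_0_compat; lra.
Qed.

Lemma flat v m a q u : 0 < a < 1 -> is_strategy q -> payoff v (pa m a) q = u ->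
  (forall n, F v q n <= u) -> forall n, (n < 2 * S m)%nat -> F v q n = u.
Proof.
  intros Ha Hq Hp HF n Hn.
  rewrite (payoff_support v (pa m a) q (2 * S m)) in Hp; auto.
  2: apply pa_strategy; lra. 2: apply pa_out.
  assert (Z : below (fun k => pa m a k * (u - F v q k)) (2 * S m) = 0).
  { replace (fun k => pa m a k * (u - F v q k)) with (fun k => u * pa m a k - pa m a k * F v q k)
      by (extensionality k; ring).
    rewrite below_minus, below_scal, pa_sum, Hp. ring. }
  assert (NN : forall k, (k < 2 * S m)%nat -> 0 <= pa m a k * (u - F v q k)).
  { intros k _. apply Rmult_le_pos. apply pa_nonneg; lra. specialize (HF k); lra. }
  pose proof (below_zero_each _ _ NN Z n Hn).
  pose proof (pa_pos m a n Ha Hn).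
  destruct (Rmult_integral _ _ H); lra.
Qed.

Lemma side_finish v m b q u : 0 < v -> 0 <= b <= 1 -> is_strategy q -> mean q = INR m + b ->
  (forall k, (2 * S m <= k)%nat -> q k = 0) ->
  (forall n, (n < 2 * S m)%nat -> F v q n = u) ->
  v / 2 = INR m + 1 /\ q = pa m b.
Proof.
  intros Hv Hb Hq Hm Hz HF.
  assert (H1 : forall n, (n < 2 * m + 1)%nat -> q n + q (S n) = 2 / v).
  { intros n Hn. pose proof (HF n ltac:(lia)). pose proof (HF (S n) ltac:(lia)).
    unfold F in *. rewrite below_S, S_INR in H0. field_simplify_eq; [|lra].
    apply (Rmult_eq_reg_l (/2)); [|lra]. nra. }
  assert (S1 : below q (2 * S m) = 1).
  { rewrite <- (strat_Series q Hq). symmetry. apply Series_support. auto. }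
  assert (S2 : forall k, (k <= S m)%nat -> below q (2 * k) = INR k * (2 / v)).
  { induction k; intros Hk. simpl; ring.
    replace (2 * S k)%nat with (S (S (2*k))) by lia. rewrite !below_S, IHk by lia.
    rewrite Rplus_assoc, H1 by lia. rewrite S_INR. ring. }
  assert (Vv : v / 2 = INR m + 1).
  { pose proof (S2 (S m) (le_n _)). rewrite S1, S_INR in H. apply helper_v; auto. }
  assert (Ev : forall k, (k <= m)%nat -> q (2 * k)%nat = q 0%nat).
  { induction k; intros Hk. reflexivity.
    replace (2 * S k)%nat with (S (S (2 * k))) by lia.
    pose proof (H1 (2*k)%nat ltac:(lia)). pose proof (H1 (S (2*k)) ltac:(lia)).
    rewrite <- (IHk ltac:(lia)). lra. }
  assert (Od : forall k, (k <= m)%nat -> q (2 * k + 1)%nat = 2 / v - q 0%nat).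
  { intros k Hk. pose proof (H1 (2*k)%nat ltac:(lia)). replace (2*k+1)%nat with (S (2*k)) by lia.
    rewrite <- (Ev k Hk). lra. }
  assert (Qa : q = alt m (q 0%nat) (2 / v - q 0%nat)).
  { extensionality n. destruct (Nat.le_gt_cases (2 * S m) n).
    rewrite Hz, alt_out by lia. reflexivity.
    destruct (parity n) as [k [->| ->]].
    rewrite alt_even, Ev by lia. reflexivity.
    rewrite alt_odd, Od by lia. reflexivity. }
  assert (Mn : mean q = q 0%nat * (INR (S m) * (INR (S m) - 1)) + (2 / v - q 0%nat) * (INR (S m) * INR (S m))).
  { unfold mean. rewrite (Series_support _ (2 * S m)).
    rewrite <- (below_alt_mean m (q 0%nat) (2 / v - q 0%nat) (S m)) by lia.
    apply below_ext. intros k _. f_equal. exact (f_equal (fun f => f k) Qa).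
    intros k Hk. rewrite Hz by auto. ring. }
  rewrite S_INR in Mn.
  assert (Tv : 2 / v = 1 / (INR m + 1)).
  { pose proof (pos_INR m). replace v with (2 * (INR m + 1)) by lra. field. lra. }
  rewrite Tv in Mn.
  assert (Q0 : q 0%nat = (1 - b) / (INR m + 1)).
  { pose proof (pos_INR m). rewrite Hm in Mn. field_simplify in Mn; [|lra].
    apply (Rmult_eq_reg_l (INR m + 1)); [|lra]. field_simplify; [|lra]. nra. }
  split; auto. rewrite Qa, Tv, Q0. unfold pa, xa, ya. f_equal. field.
  pose proof (pos_INR m). lra.
Qed.

Lemma eq_F m b n : 0 <= b <= 1 ->
  F (2 * (INR m + 1)) (pa m b) n <= 1 - b /\ ((n < 2 * S m)%nat -> F (2 * (INR m + 1)) (pa m b) n = 1 - b).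
Proof.
  intros Hb. pose proof (pos_INR m) as Pm.
  destruct (Nat.le_gt_cases (2 * S m) n) as [Hn|Hn].
  - assert (B : below (pa m b) n = 1) by (rewrite (below_support _ (2 * S m)); auto; [apply pa_sum|apply pa_out]).
    unfold F. rewrite B, pa_out by auto. split; [|intros; lia].
    apply le_INR in Hn. rewrite INR_2Sm in Hn. lra.
  - cut (F (2 * (INR m + 1)) (pa m b) n = 1 - b). intros H; split; [right|intros _]; exact H.
    destruct (parity n) as [k [->| ->]]; unfold F, pa;
    try (rewrite below_alt_even by lia); try (rewrite below_alt_odd by lia);
    try (rewrite alt_even by lia); try (rewrite alt_odd by lia); unfold xa, ya;
    rewrite ?plus_INR, ?mult_INR; simpl; field; lra.
Qed.

Lemma eq_best m b p' : 0 <= b <= 1 -> is_strategy p' ->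
  payoff (2 * (INR m + 1)) p' (pa m b) <= 1 - b.
Proof.
  intros Hb Hp. destruct (payoff_series (2 * (INR m + 1)) p' (pa m b) Hp (pa_strategy m b Hb)) as [E Ex].
  rewrite E.
  assert (0 <= Series (fun n => (1 - b) * p' n - p' n * F (2 * (INR m + 1)) (pa m b) n)).
  { apply Series_nonneg. intros n. destruct (eq_F m b n Hb) as [H _]. destruct Hp as [H0 _].
    specialize (H0 n). nra. apply exR_minus; auto. apply exR_scal. apply strat_ex; auto. }
  rewrite Series_minus, Series_scal_l, strat_Series in H; auto. lra.
  apply exR_scal. apply strat_ex; auto.
Qed.

Lemma eq_value m a b : 0 <= a <= 1 -> 0 <= b <= 1 ->
  payoff (2 * (INR m + 1)) (pa m a) (pa m b) = 1 - b.
Proof.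
  intros Ha Hb. rewrite (payoff_support _ _ _ (2 * S m)).
  transitivity ((1 - b) * below (pa m a) (2 * S m)); [|rewrite pa_sum; ring].
  rewrite <- below_scal. apply below_ext. intros k Hk. destruct (eq_F m b k Hb) as [_ H]. rewrite H; auto. ring.
  apply pa_strategy; auto. apply pa_strategy; auto. apply pa_out.
Qed.

Lemma only_if v1 v2 m alpha beta p q :
  v2 <= v1 -> 0 < v2 ->
  0 < beta -> beta <= alpha -> alpha < 1 ->
  is_strategy p -> is_strategy q ->
  mean p = INR m + alpha -> mean q = INR m + beta ->
  nash v1 v2 p q ->
  v1 / 2 = INR m + 1 /\ v2 / 2 = INR m + 1 /\ p = pa m alpha /\ q = pa m beta.
Proof.
  intros H12 Hv2 Hb Hba Ha Hp Hq Hmp Hmq [_ [_ [N1 N2]]].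
  assert (Ia : 0 <= alpha <= 1) by lra. assert (Ib : 0 <= beta <= 1) by lra.
  pose proof (N1 _ (pa_strategy m alpha Ia)) as T1. pose proof (N2 _ (pa_strategy m beta Ib)) as T2.
  rewrite payoff_pa in T1, T2 by auto.
  assert (U1 : payoff v1 p q = v1 * prob_gt p q + v1 / 2 * prob_eq p q - (INR m + alpha)) by (unfold payoff; rewrite Hmp; ring).
  assert (U2 : payoff v2 q p = v2 * prob_gt q p + v2 / 2 * prob_eq p q - (INR m + beta)) by (unfold payoff; rewrite Hmq, prob_eq_comm; ring).
  pose proof (prob_total p q Hp Hq) as TOT.
  set (G := prob_gt p q) in *. set (G' := prob_gt q p) in *. set (E := prob_eq p q) in *.
  set (Tp := Tsum m alpha q) in *. set (Tq := Tsum m beta p) in *.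
  assert (A1 : Tp <= 2 * G + E).
  { rewrite U1 in T1. apply (Rmult_le_reg_l (v1 / 2)). lra. lra. }
  assert (A2 : Tq <= 2 * G' + E).
  { rewrite U2 in T2. apply (Rmult_le_reg_l (v2 / 2)). lra. lra. }
  pose proof (Tsum_lower m alpha beta q Ia Hq Hmq) as L1.
  pose proof (Tsum_lower m beta alpha p Ib Hp Hmp) as L2.
  fold Tp in L1. fold Tq in L2.
  pose proof (strat_below_le1 q (2 * S m) Hq) as Bq.
  pose proof (strat_below_le1 p (2 * S m) Hp) as Bp.
  pose proof (pos_INR m) as Pm.
  assert (S12 : Tp + Tq <= 2) by lra.
  assert (C : (1 - alpha) * (1 - below q (2 * S m)) + (1 - beta) * (1 - below p (2 * S m)) <= 0) by nra.
  assert (C1 : 0 <= (1 - alpha) * (1 - below q (2 * S m))) by nra.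
  assert (C2 : 0 <= (1 - beta) * (1 - below p (2 * S m))) by nra.
  assert (Qq : below q (2 * S m) = 1).
  { assert ((1 - alpha) * (1 - below q (2 * S m)) = 0) by lra.
    destruct (Rmult_integral _ _ H); lra. }
  assert (Pp : below p (2 * S m) = 1).
  { assert ((1 - beta) * (1 - below p (2 * S m)) = 0) by lra.
    destruct (Rmult_integral _ _ H); lra. }
  assert (EqTp : Tp = 2 * G + E) by nra.
  assert (EqTq : Tq = 2 * G' + E) by nra.
  assert (Z : forall r, is_strategy r -> below r (2 * S m) = 1 -> forall k, (2 * S m <= k)%nat -> r k = 0).
  { intros r Hr Br k Hk.
    destruct (Series_split r (S (2 * m)) (proj1 Hr) (strat_ex r Hr)) as [Es _].
    replace (S (S (2 * m))) with (2 * S m)%nat in Es by lia.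
    rewrite Br, (strat_Series r Hr) in Es.
    assert (Series (fun j => r (2 * S m + j)%nat) = 0) by lra.
    replace (S (S (2 * m))) with (2 * S m)%nat in H by lia.
    replace k with (2 * S m + (k - 2 * S m))%nat by lia.
    apply (Series_zero_each (fun j => r (2 * S m + j)%nat)); auto.
    intros; apply (proj1 Hr).
    apply (ex_series_incr_n r (2 * S m)). apply strat_ex; auto. }
  assert (Fl1 : forall n, (n < 2 * S m)%nat -> F v1 q n = payoff v1 p q).
  { assert (PE : payoff v1 (pa m alpha) q = payoff v1 p q).
    { rewrite payoff_pa by auto. fold Tp. rewrite U1, EqTp. unfold G, E. field. }
    apply (flat v1 m alpha q). lra. auto. exact PE.
    intros n. rewrite <- payoff_delta by auto. apply N1. apply delta_strategy. }
  assert (Fl2 : forall n, (n < 2 * S m)%nat -> F v2 p n = payoff v2 q p).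
  { assert (PE : payoff v2 (pa m beta) p = payoff v2 q p).
    { rewrite payoff_pa by auto. fold Tq. rewrite U2, EqTq. unfold G', E. field. }
    apply (flat v2 m beta p). lra. auto. exact PE.
    intros n. rewrite <- payoff_delta by auto. apply N2. apply delta_strategy. }
  destruct (side_finish v1 m beta q _ ltac:(lra) Ib Hq Hmq (Z q Hq Qq) Fl1) as [V1 Q1].
  destruct (side_finish v2 m alpha p _ ltac:(lra) Ia Hp Hmp (Z p Hp Pp) Fl2) as [V2 P2].
  auto.
Qed.

Theorem proposition3 (v1 v2 : R) (m : nat) (alpha beta : R) (p q : nat -> R) :
  v2 <= v1 -> 0 < v2 ->
  0 < beta -> beta <= alpha -> alpha < 1 ->
  is_strategy p -> is_strategy q ->
  mean p = INR m + alpha -> mean q = INR m + beta ->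
  (nash v1 v2 p q <->
     (v1 / 2 = INR m + 1 /\ v2 / 2 = INR m + 1 /\
      p = mix (1 - alpha) (UE m) (UO (S m)) /\
      q = mix (1 - beta) (UE m) (UO (S m)))) /\
  (nash v1 v2 p q ->
     payoff v1 p q = 1 - beta /\ payoff v2 q p = 1 - alpha).
Proof.
  intros H12 Hv2 Hb Hba Ha Hp Hq Hmp Hmq.
  assert (Ia : 0 <= alpha <= 1) by lra. assert (Ib : 0 <= beta <= 1) by lra.
  rewrite !mix_alt. fold (xa m alpha) (ya m alpha) (xa m beta) (ya m beta).
  fold (pa m alpha) (pa m beta).
  assert (OI := only_if v1 v2 m alpha beta p q H12 Hv2 Hb Hba Ha Hp Hq Hmp Hmq).
  assert (IFF : nash v1 v2 p q <->
     (v1 / 2 = INR m + 1 /\ v2 / 2 = INR m + 1 /\ p = pa m alpha /\ q = pa m beta)).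
  { split; auto. intros [V1 [V2 [-> ->]]].
    replace v1 with (2 * (INR m + 1)) by lra. replace v2 with (2 * (INR m + 1)) by lra.
    split; [apply pa_strategy; auto|]. split; [apply pa_strategy; auto|]. split.
    - intros p' Hp'. rewrite eq_value by auto. apply eq_best; auto.
    - intros q' Hq'. rewrite eq_value by auto. apply eq_best; auto. }
  split; auto.
  intros N. destruct (OI N) as [V1 [V2 [-> ->]]].
  replace v1 with (2 * (INR m + 1)) by lra. replace v2 with (2 * (INR m + 1)) by lra.
  split; apply eq_value; auto.
Qed.
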